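(* Let $A$ be a braided Hopf algebra and let $B$ be a Hopf subalgebra of $U_0(A)$ which is braided with the restriction of the braiding $(x\mid y)=\langle a\mid S(b)\rangle$ (for $x=l^+_A(a)$, $y=l^-_A(b)$) on $U_0(A)$. Define $\phi:A\to B^\circ$ by $\phi(a)(u)=u(a)$ for $a\in A$, $u\in B$. Then $\phi$ is a Hopf algebra map, and if $a\in A$ satisfies $l_A^+(a)\in B$ (resp. $l_A^-(a)\in B$) then $\phi(a)=l_B^+(l_A^+(a))$ (resp. $\phi(a)=l_B^-(l_A^-(a))$). Consequently $\phi(A)\supseteq U(B)$.
   Context: Sweedler notation $\Delta(a)=\sum a_{(1)}\otimes a_{(2)}$. A braiding on a bialgebra $A$ over a field $k$ is a bilinear form $\langle\cdot\mid\cdot\rangle:A\times A\to k$ such that for all $a,b,c\in A$: (1) $\sum\langle a_{(1)}\mid b_{(1)}\rangle\, b_{(2)}a_{(2)}=\sum\langle a_{(2)}\mid b_{(2)}\rangle\, a_{(1)}b_{(1)}$; (2) it is invertible in the convolution algebra $(A\otimes A)^*$; (3) $\langle a\mid bc\rangle=\sum\langle a_{(1)}\mid b\rangle\langle a_{(2)}\mid c\rangle$; (4) $\langle ab\mid c\rangle=\sum\langle b\mid c_{(1)}\rangle\langle a\mid c_{(2)}\rangle$. A braided Hopf algebra is a Hopf algebra with a braiding. $A^\circ$ is the restricted dual Hopf algebra. For a braided Hopf algebra $A$ with antipode $S$, $l_A^{\pm}:A\to A^\circ$ are $l_A^+(a)(b)=\langle a\mid b\rangle$, $l_A^-(a)(b)=\langle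 b\mid S(a)\rangle$. $U^\pm=l_A^\pm(A)$, $U(A)$ is the Hopf subalgebra of $A^\circ$ generated by $U^+\cup U^-$, and $U_0(A)=U^+\cap U^-$. The form $(l^+_A(a)\mid l^-_A(b))=\langle a\mid S(b)\rangle$ is a well-defined braiding on $U_0(A)$. For the braided Hopf algebra $B$, $l_B^\pm$ and $U(B)\subseteq B^\circ$ are defined in the same way using this braiding. *)

(* Defs.v *)
(* Hopf algebras over a field k, encoded with explicit
   (Sweedler-style) finite coproduct lists; tensors are compared through
   multilinear forms (which separate tensors over a field). *)
From HB Require Import structures.
From mathcomp Require Import all_boot all_order all_algebra.
Set Implicit Arguments. Unset Strict Implicit. Unset Printing Implicit Defensive.
Import GRing.Theory.
Local Open Scope ring_scope.

Section HopfDefs.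
Variable k : fieldType.

Fixpoint allP (T : Type) (P : T -> Prop) (s : seq T) : Prop :=
  match s with nil => True | x :: s' => P x /\ allP P s' end.

Definition lin_fun (V : lmodType k) (f : V -> k) : Prop :=
  forall (c : k) (x y : V), f (c *: x + y) = c * f x + f y.

Definition bilin (U V : lmodType k) (f : U -> V -> k) : Prop :=
  (forall (c : k) x x' y, f (c *: x + x') y = c * f x y + f x' y) /\
  (forall (c : k) x y y', f x (c *: y + y') = c * f x y + f x y').

Definition trilin (U : lmodType k) (g : U -> U -> U -> k) : Prop :=
  (forall (c : k) x x' y z, g (c *: x + x') y z = c * g x y z + g x' y z) /\
  (forall (c : k) x y y' z, g x (c *: y + y') z = c * g x y z + g x y' z) /\
  (forall (c : k) x y z z', g x y (c *: z + z') = c * g x y z + g x y z').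

(* evaluation of a bilinear map on a tensor sum_i t_i.1 (x) t_i.2 *)
Definition tsum (U V : Type) (R : nmodType) (f : U -> V -> R) (t : seq (U * V)) : R :=
  \sum_(p <- t) f p.1 p.2.

(* Data of a Hopf algebra on an associative unital k-algebra A:
   coproduct (Delta a = sum of the listed pairs), counit, antipode. *)
Record hopf (A : algType k) := Hopf {
  cop : A -> seq (A * A);
  eps : A -> k;
  antip : A -> A }.

Definition is_hopf (A : algType k) (H : hopf A) : Prop :=
  let D := cop H in let e := eps H in let S := antip H in
  (forall f : A -> A -> k, bilin f -> forall (c : k) a a',
      tsum f (D (c *: a + a')) = c * tsum f (D a) + tsum f (D a')) /\
  (forall g : A -> A -> A -> k, trilin g -> forall a,
      \sum_(p <- D a) \sum_(q <- D p.1) g q.1 q.2 p.2 =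
      \sum_(p <- D a) \sum_(q <- D p.2) g p.1 q.1 q.2) /\
  (forall a, \sum_(p <- D a) e p.1 *: p.2 = a) /\
  (forall a, \sum_(p <- D a) e p.2 *: p.1 = a) /\
  lin_fun e /\ (forall a b, e (a * b) = e a * e b) /\ e 1 = 1 /\
  (forall f : A -> A -> k, bilin f -> forall a b,
      tsum f (D (a * b)) =
      \sum_(p <- D a) \sum_(q <- D b) f (p.1 * q.1) (p.2 * q.2)) /\
  (forall f : A -> A -> k, bilin f -> tsum f (D 1) = f 1 1) /\
  (forall (c : k) a b, S (c *: a + b) = c *: S a + S b) /\
  (forall a, \sum_(p <- D a) S p.1 * p.2 = (e a)%:A) /\
  (forall a, \sum_(p <- D a) p.1 * S p.2 = (e a)%:A).

Definition conv (A : algType k) (H : hopf A) (f g : A -> k) : A -> k :=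
  fun a => \sum_(p <- cop H a) f p.1 * g p.2.

(* the restricted dual H^circ: linear f with f o m in H^* (x) H^* *)
Definition resdual (A : algType k) (H : hopf A) (f : A -> k) : Prop :=
  lin_fun f /\
  exists t : seq ((A -> k) * (A -> k)),
    allP (fun p => lin_fun p.1 /\ lin_fun p.2) t /\
    forall a b, f (a * b) = \sum_(p <- t) p.1 a * p.2 b.

(* psi : C -> H^circ is a Hopf algebra map (H^circ (x) H^circ is viewed
   inside (H (x) H)^* ) *)
Definition hopf_map (C H : algType k) (HC : hopf C) (HH : hopf H)
  (psi : C -> H -> k) : Prop :=
  (forall x, resdual HH (psi x)) /\
  (forall (c : k) x y h, psi (c *: x + y) h = c * psi x h + psi y h) /\
  (forall x y, psi (x * y) =1 conv HH (psi x) (psi y)) /\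
  (psi 1 =1 eps HH) /\
  (forall x h h', psi x (h * h') =
      \sum_(p <- cop HC x) psi p.1 h * psi p.2 h') /\
  (forall x, psi x 1 = eps HC x) /\
  (forall x, psi (antip HC x) =1 (fun h => psi x (antip HH h))).

Definition braiding (A : algType k) (H : hopf A) (br : A -> A -> k) : Prop :=
  let D := cop H in let e := eps H in
  bilin br /\
  (forall a b, \sum_(p <- D a) \sum_(q <- D b) br p.1 q.1 *: (q.2 * p.2) =
               \sum_(p <- D a) \sum_(q <- D b) br p.2 q.2 *: (p.1 * q.1)) /\
  (exists br' : A -> A -> k, bilin br' /\ forall a b,
      \sum_(p <- D a) \sum_(q <- D b) br p.1 q.1 * br' p.2 q.2 = e a * e b /\
      \sum_(p <- D a) \sum_(q <- D b) br' p.1 q.1 * br p.2 q.2 = e a * e b) /\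
  (forall a b c, br a (b * c) = \sum_(p <- D a) br p.1 b * br p.2 c) /\
  (forall a b c, br (a * b) c = \sum_(p <- D c) br b p.1 * br a p.2).

Definition lplus (A : algType k) (br : A -> A -> k) (a : A) : A -> k :=
  fun b => br a b.
Definition lminus (A : algType k) (H : hopf A) (br : A -> A -> k) (a : A)
  : A -> k := fun b => br b (antip H a).

Definition in_Uplus (A : algType k) (br : A -> A -> k) (f : A -> k) : Prop :=
  exists a, f =1 lplus br a.
Definition in_Uminus (A : algType k) (H : hopf A) (br : A -> A -> k)
  (f : A -> k) : Prop := exists a, f =1 lminus H br a.
Definition in_U0 (A : algType k) (H : hopf A) (br : A -> A -> k)
  (f : A -> k) : Prop := in_Uplus br f /\ in_Uminus H br f.

Definition hopf_subalg_pred (A : algType k) (H : hopf A)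
  (P : (A -> k) -> Prop) : Prop :=
  (forall f, P f -> resdual H f) /\
  (forall f g, P f -> f =1 g -> P g) /\
  (forall (c : k) f g, P f -> P g -> P (fun a => c * f a + g a)) /\
  P (eps H) /\
  (forall f g, P f -> P g -> P (conv H f g)) /\
  (forall f, P f -> P (fun a => f (antip H a))) /\
  (forall f, P f -> exists t : seq ((A -> k) * (A -> k)),
      allP (fun p => P p.1 /\ P p.2) t /\
      forall a b, f (a * b) = \sum_(p <- t) p.1 a * p.2 b).

Definition in_U (A : algType k) (H : hopf A) (br : A -> A -> k)
  (F : A -> k) : Prop :=
  forall P, hopf_subalg_pred H P ->
    (forall a, P (lplus br a)) -> (forall a, P (lminus H br a)) -> P F.

End HopfDefs.

(* Main.v *)
Require Import Defs.
From HB Require Import structures.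
From mathcomp Require Import all_boot all_order all_algebra ring.
Import GRing.Theory.
Local Open Scope ring_scope.

Section Key.
Set Implicit Arguments. Unset Strict Implicit.
Variable k : fieldType.
Variable A : algType k.
Variable H : hopf A.
Hypothesis hH : is_hopf H.
Local Notation D := (cop H).
Local Notation e := (eps H).
Local Notation S := (antip H).
Let hH' := hH.

Lemma DlinE (F : A * A -> k) : bilin (fun u v => F (u, v)) -> forall c a a',
  \sum_(p <- D (c *: a + a')) F p =
  c * \sum_(p <- D a) F p + \sum_(p <- D a') F p.
Proof.
have [h _] := hH' => hF c a a'.
have := h _ hF c a a'; rewrite /tsum.
have E : forall s : seq (A * A), \sum_(p <- s) F (p.1, p.2) = \sum_(p <- s) F p.
  by move=> s; apply: eq_bigr => -[].
by rewrite !E.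
Qed.

Lemma coasE (g : A -> A -> A -> k) : trilin g -> forall a,
  \sum_(p <- D a) \sum_(q <- D p.1) g q.1 q.2 p.2 =
  \sum_(p <- D a) \sum_(q <- D p.2) g p.1 q.1 q.2.
Proof. by have [_ [h _]] := hH'; exact: h. Qed.

Lemma clE a : \sum_(p <- D a) e p.1 *: p.2 = a.
Proof. by have [_ [_ [h _]]] := hH'; exact: h. Qed.
Lemma crE a : \sum_(p <- D a) e p.2 *: p.1 = a.
Proof. by have [_ [_ [_ [h _]]]] := hH'; exact: h. Qed.
Lemma elin : lin_fun e.
Proof. by have [_ [_ [_ [_ [h _]]]]] := hH'; exact: h. Qed.
Lemma emul a b : e (a * b) = e a * e b.
Proof. by have [_ [_ [_ [_ [_ [h _]]]]]] := hH'; exact: h. Qed.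
Lemma e1 : e 1 = 1.
Proof. by have [_ [_ [_ [_ [_ [_ [h _]]]]]]] := hH'; exact: h. Qed.
Lemma DmulE (F : A * A -> k) : bilin (fun u v => F (u, v)) -> forall a b,
  \sum_(p <- D (a * b)) F p =
  \sum_(p <- D a) \sum_(q <- D b) F (p.1 * q.1, p.2 * q.2).
Proof.
have [_ [_ [_ [_ [_ [_ [_ [h _]]]]]]]] := hH' => hF a b.
have := h _ hF a b; rewrite /tsum => <-.
by apply: eq_bigr => -[].
Qed.
Lemma D1E (F : A * A -> k) : bilin (fun u v => F (u, v)) ->
  \sum_(p <- D 1) F p = F (1, 1).
Proof.
have [_ [_ [_ [_ [_ [_ [_ [_ [h _]]]]]]]]] := hH' => hF.
have := h _ hF; rewrite /tsum => <-.
by apply: eq_bigr => -[].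
Qed.
Lemma SlinE c a b : S (c *: a + b) = c *: S a + S b.
Proof. by have [_ [_ [_ [_ [_ [_ [_ [_ [_ [h _]]]]]]]]]] := hH'; exact: h. Qed.
Lemma antlE a : \sum_(p <- D a) S p.1 * p.2 = (e a)%:A.
Proof. by have [_ [_ [_ [_ [_ [_ [_ [_ [_ [_ [h _]]]]]]]]]]] := hH'; exact: h. Qed.
Lemma antrE a : \sum_(p <- D a) p.1 * S p.2 = (e a)%:A.
Proof. by have [_ [_ [_ [_ [_ [_ [_ [_ [_ [_ [_ h]]]]]]]]]]] := hH'; exact: h. Qed.


Section Lin.
Variable Phi : A -> k.
Hypothesis hP : lin_fun Phi.
Lemma lin0 : Phi 0 = 0.
Proof.
have := hP 1 0 0; rewrite scaler0 addr0 mul1r => /(congr1 (fun t => t - Phi 0)).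
by rewrite subrr addrK.
Qed.
Lemma linD x y : Phi (x + y) = Phi x + Phi y.
Proof. by have := hP 1 x y; rewrite scale1r mul1r. Qed.
Lemma linZ c x : Phi (c *: x) = c * Phi x.
Proof. by have := hP c x 0; rewrite addr0 lin0 addr0. Qed.
Lemma linsum I (s : seq I) (F : I -> A) :
  Phi (\sum_(i <- s) F i) = \sum_(i <- s) Phi (F i).
Proof.
elim: s => [|i s IH]; first by rewrite !big_nil lin0.
by rewrite !big_cons linD IH.
Qed.
Lemma counitL a : \sum_(p <- D a) e p.1 * Phi p.2 = Phi a.
Proof.
rewrite -{2}(clE a) linsum; apply: eq_bigr => p _; by rewrite linZ.
Qed.
Lemma counitR a : \sum_(p <- D a) e p.2 * Phi p.1 = Phi a.
Proof.
rewrite -{2}(crE a) linsum; apply: eq_bigr => p _; by rewrite linZ.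
Qed.
End Lin.

Lemma S0 : S 0 = 0.
Proof.
have := SlinE 1 0 0; rewrite scaler0 addr0 scale1r => /(congr1 (fun t => t - S 0)).
by rewrite subrr addrK.
Qed.
Lemma SD x y : S (x + y) = S x + S y.
Proof. by have := SlinE 1 x y; rewrite !scale1r. Qed.
Lemma SZ c x : S (c *: x) = c *: S x.
Proof. by have := SlinE c x 0; rewrite addr0 S0 addr0. Qed.
Lemma Ssum I (s : seq I) (F : I -> A) :
  S (\sum_(i <- s) F i) = \sum_(i <- s) S (F i).
Proof.
elim: s => [|i s IH]; first by rewrite !big_nil S0.
by rewrite !big_cons SD IH.
Qed.

Lemma Tlin (F : A * A -> k) : bilin (fun u v => F (u, v)) ->
  lin_fun (fun a => \sum_(p <- D a) F p).
Proof. move=> hF c a a'; exact: DlinE. Qed.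

Lemma DscalE (F : A * A -> k) : bilin (fun u v => F (u, v)) -> forall c,
  \sum_(p <- D (c%:A)) F p = c * F (1, 1).
Proof.
move=> hF c; rewrite -[c%:A]addr0 (DlinE hF) (lin0 (Tlin hF)) addr0.
by rewrite (D1E hF).
Qed.

Lemma eS a : e (S a) = e a.
Proof.
have := congr1 e (antlE a).
rewrite (linsum elin) (linZ elin) e1 mulr1 => <-.
rewrite -(counitR (Phi := fun x => e (S x))).
  by apply: eq_bigr => p _; rewrite emul mulrC.
by move=> c x y; rewrite SlinE elin.
Qed.

Lemma bilin_of (F : A -> A -> k) : (forall v, lin_fun (fun u => F u v)) ->
  (forall u, lin_fun (F u)) -> bilin F.
Proof. by move=> h1 h2; split => *; [apply: h1 | apply: h2]. Qed.

Lemma trilin_of (F : A -> A -> A -> k) : (forall v w, lin_fun (fun u => F u v w)) ->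
  (forall u w, lin_fun (fun v => F u v w)) -> (forall u v, lin_fun (F u v)) -> trilin F.
Proof. by move=> h1 h2 h3; split => *; [apply: h1 | split => *; [apply: h2|apply: h3]]. Qed.

Ltac lsum := rewrite ?mulr_sumr -?big_split /=; apply: eq_bigr => ? _.

Section DS.
Variable f : A -> A -> k.
Hypothesis hf : bilin f.
Let hfl c x x' y : f (c *: x + x') y = c * f x y + f x' y.
Proof. exact: (proj1 hf). Qed.
Let hfr c x y y' : f x (c *: y + y') = c * f x y + f x y'.
Proof. exact: (proj2 hf). Qed.

Definition PL a := \sum_(q <- D (S a)) f q.1 q.2.
Definition PR a := \sum_(p <- D a) f (S p.2) (S p.1).

Lemma linPL : lin_fun PL.
Proof. by move=> c x y; rewrite /PL SlinE; apply: DlinE. Qed.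

Lemma linPR : lin_fun PR.
Proof.
move=> c x y; rewrite /PR; apply: DlinE.
by apply: bilin_of => [v|u] c' u1 u2 /=; rewrite SlinE ?hfl ?hfr.
Qed.

Definition gm x y z := \sum_(q <- D (S x)) \sum_(r <- D y) \sum_(t <- D z)
   f (q.1 * r.1 * S t.2) (q.2 * r.2 * S t.1).

Lemma gm_tri : trilin gm.
Proof.
apply: trilin_of.
- move=> y z c x x'; rewrite /gm SlinE; apply: DlinE.
  apply: bilin_of => [v|u] c' u1 u2 /=; lsum; lsum.
    by rewrite !mulrDl -!scalerAl hfl.
  by rewrite !mulrDl -!scalerAl hfr.
- move=> x z c y y'; rewrite /gm; lsum; apply: DlinE.
  apply: bilin_of => [v|u] c' u1 u2 /=; lsum.
    by rewrite mulrDr mulrDl -scalerAr -scalerAl hfl.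
  by rewrite mulrDr mulrDl -scalerAr -scalerAl hfr.
- move=> x y c z z'; rewrite /gm; lsum; lsum; apply: DlinE.
  apply: bilin_of => [v|u] c' u1 u2 /=.
    by rewrite SlinE mulrDr -scalerAr hfr.
  by rewrite SlinE mulrDr -scalerAr hfl.
Qed.

Lemma ZR a : \sum_(p <- D a) \sum_(s <- D p.1) gm s.1 s.2 p.2 = PR a.
Proof.
rewrite -(counitL linPR); apply: eq_bigr => p _.
pose h := fun w : A * A => \sum_(t <- D p.2) f (w.1 * S t.2) (w.2 * S t.1).
have hb : bilin (fun u v => h (u, v)).
  apply: bilin_of => [v|u] c' u1 u2; rewrite /h /=; lsum.
    by rewrite mulrDl -scalerAl hfl.
  by rewrite mulrDl -scalerAl hfr.
transitivity (\sum_(s <- D p.1) \sum_(w <- D (S s.1 * s.2)) h w).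
  by apply: eq_bigr => s _; rewrite (DmulE hb).
rewrite -(linsum (Tlin hb)) antlE (DscalE hb) /h.
by congr (_ * _); apply: eq_bigr => t _; rewrite !mul1r.
Qed.

Lemma inner x1 x2 c : \sum_(s <- D c) \sum_(r <- D s.1) \sum_(t <- D s.2)
   f (x1 * r.1 * S t.2) (x2 * r.2 * S t.1) = e c * f x1 x2.
Proof.
pose g1 := fun u v z => \sum_(t <- D z) f (x1 * u * S t.2) (x2 * v * S t.1).
have tg1 : trilin g1.
  apply: trilin_of.
  - move=> v z c' u1 u2; rewrite /g1; lsum.
    by rewrite mulrDr mulrDl -scalerAr -scalerAl hfl.
  - move=> u z c' u1 u2; rewrite /g1; lsum.
    by rewrite mulrDr mulrDl -scalerAr -scalerAl hfr.
  - move=> u v c' u1 u2; rewrite /g1; apply: DlinE.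
    apply: bilin_of => [w|w] c'' w1 w2 /=.
      by rewrite SlinE mulrDr -scalerAr hfr.
    by rewrite SlinE mulrDr -scalerAr hfl.
have := coasE tg1 c; rewrite /g1 => ->.
transitivity (\sum_(s <- D c) \sum_(r <- D s.2) \sum_(t <- D r.1)
   f (x1 * s.1 * S r.2) (x2 * t.1 * S t.2)).
  apply: eq_bigr => s _.
  pose g2 := fun u v w => f (x1 * s.1 * S w) (x2 * u * S v).
  have tg2 : trilin g2.
    apply: trilin_of => [v w|u w|u v] c' u1 u2; rewrite /g2.
    - by rewrite mulrDr mulrDl -scalerAr -scalerAl hfr.
    - by rewrite SlinE mulrDr -scalerAr hfr.
    - by rewrite SlinE mulrDr -scalerAr hfl.
  by have := coasE tg2 s.2; rewrite /g2 => ->.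
transitivity (\sum_(s <- D c) \sum_(r <- D s.2) e r.1 * f (x1 * s.1 * S r.2) x2).
  apply: eq_bigr => s _; apply: eq_bigr => r _.
  have lf : lin_fun (f (x1 * s.1 * S r.2)) by move=> *; rewrite hfr.
  transitivity (f (x1 * s.1 * S r.2) (x2 * \sum_(t <- D r.1) t.1 * S t.2)).
    by rewrite mulr_sumr (linsum lf); apply: eq_bigr => t _; rewrite mulrA.
  by rewrite antrE mulr_algr (linZ lf).
transitivity (\sum_(s <- D c) f (x1 * s.1 * S s.2) x2).
  apply: eq_bigr => s _; apply: (counitL (Phi := fun w => f (x1 * s.1 * S w) x2)).
  by move=> c' u1 u2; rewrite SlinE mulrDr -scalerAr hfl.
have lf : lin_fun (fun w => f (x1 * w) x2) by move=> *; rewrite mulrDr -scalerAr hfl.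
transitivity (f (x1 * \sum_(s <- D c) s.1 * S s.2) x2).
  by rewrite (linsum lf); apply: eq_bigr => s _; rewrite mulrA.
by rewrite antrE mulr_algr -(linZ (Phi := fun w => f w x2)) // => *; rewrite hfl.
Qed.

Lemma ZL a : \sum_(p <- D a) \sum_(s <- D p.2) gm p.1 s.1 s.2 = PL a.
Proof.
rewrite -(counitR linPL); apply: eq_bigr => p _.
rewrite /gm exchange_big /PL mulr_sumr; apply: eq_bigr => q _.
exact: inner.
Qed.

Lemma DS a : PL a = PR a.
Proof. by rewrite -ZL -ZR (coasE (gm_tri)). Qed.

End DS.

Lemma conv_unit (u v : A -> k) : lin_fun u -> lin_fun v ->
  (forall a, \sum_(p <- D a) u p.1 * u p.2 = u a) ->
  (forall a, \sum_(p <- D a) u p.1 * v p.2 = e a) -> forall a, u a = e a.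
Proof.
move=> lu lv h1 h2 a.
have tg : trilin (fun x y z => u x * u y * v z).
  by apply: trilin_of => ? ? ? ? ?; rewrite ?lu ?lv; ring.
rewrite -(counitR lu).
transitivity (\sum_(p <- D a) \sum_(q <- D p.2) u p.1 * u q.1 * v q.2).
  apply: eq_bigr => p _; rewrite -h2 mulrC mulr_sumr.
  by apply: eq_bigr => q _; rewrite mulrA.
rewrite -(coasE tg) -h2; apply: eq_bigr => p _.
by rewrite -h1 mulr_suml.
Qed.

Section Br.
Variable br : A -> A -> k.
Hypothesis hbr : braiding H br.
Let brl c x x' y : br (c *: x + x') y = c * br x y + br x' y.
Proof. by have [[h _] _] := hbr; exact: h. Qed.
Let brr c x y y' : br x (c *: y + y') = c * br x y + br x y'.
Proof. by have [[_ h] _] := hbr; exact: h. Qed.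
Let b3E a b c : br a (b * c) = \sum_(p <- D a) br p.1 b * br p.2 c.
Proof. by have [_ [_ [_ [h _]]]] := hbr; exact: h. Qed.
Let b4E a b c : br (a * b) c = \sum_(p <- D c) br b p.1 * br a p.2.
Proof. by have [_ [_ [_ [_ h]]]] := hbr; exact: h. Qed.

Lemma brA1 a : br a 1 = e a.
Proof.
have [_ [_ [[br' [[hl' hr'] hinv]] _]]] := hbr.
apply: (conv_unit (u := fun x => br x 1) (v := fun x => br' x 1)).
all: try (move=> ? ? ? /=; rewrite ?brl ?hl' ?brr ?hr' //).
- by move=> x; rewrite -b3E mulr1.
- move=> x; have [h _] := hinv x 1; rewrite e1 mulr1 in h; rewrite -h.
  apply: eq_bigr => p _.
  rewrite (D1E (F := fun q => br p.1 q.1 * br' p.2 q.2)) //.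
  by apply: bilin_of => ? ? ? ?; rewrite ?brr ?hr'; ring.
Qed.

Lemma br1A c : br 1 c = e c.
Proof.
have [_ [_ [[br' [[hl' hr'] hinv]] _]]] := hbr.
apply: (conv_unit (u := br 1) (v := fun x => br' 1 x)).
all: try (move=> ? ? ? /=; rewrite ?brl ?hl' ?brr ?hr' //).
- by move=> x; rewrite -b4E mulr1.
- move=> x; have [h _] := hinv 1 x; rewrite e1 mul1r in h; rewrite -h.
  rewrite (D1E (F := fun p => \sum_(q <- D x) br p.1 q.1 * br' p.2 q.2)) //.
  apply: bilin_of => ? ? ? ?; lsum; by rewrite ?brl ?hl'; ring.
Qed.

Lemma Gconv a b : \sum_(p <- D a) \sum_(q <- D b) br p.1 (S q.1) * br p.2 q.2 = e a * e b.
Proof.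
rewrite exchange_big /=.
have lb : lin_fun (br a) by move=> *; rewrite brr.
transitivity (\sum_(q <- D b) br a (S q.1 * q.2)).
  by apply: eq_bigr => q _; rewrite b3E.
by rewrite -(linsum lb) antlE (linZ lb) brA1 mulrC.
Qed.

Lemma Fconv a b : \sum_(p <- D a) \sum_(q <- D b)
  br (S p.1) (S q.1) * br p.2 (S q.2) = e a * e b.
Proof.
transitivity (\sum_(p <- D a) br (S p.1 * p.2) (S b)).
  apply: eq_bigr => p _.
  pose fp := fun x y => br (S p.1) y * br p.2 x.
  have hfp : bilin fp.
    by apply: bilin_of => ? ? ? ?; rewrite /fp ?brl ?brr; ring.
  have := DS hfp b; rewrite /PL /PR /fp => E.
  rewrite b4E; transitivity (\sum_(q <- D b) br (S p.1) (S q.1) * br p.2 (S q.2)) => //.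
  by rewrite -E; apply: eq_bigr => q _; rewrite mulrC.
have lb : lin_fun (br ^~ (S b)) by move=> * /=; rewrite brl.
by rewrite -(linsum lb) antlE (linZ lb) /= br1A eS.
Qed.

Lemma brS_main a b : br (S a) (S b) = br a b.
Proof.
pose X := fun a1 b1 a2 b2 a3 b3 => br (S a1) (S b1) * br a2 (S b2) * br a3 b3.
transitivity (\sum_(p <- D a) \sum_(q <- D b) br (S p.1) (S q.1) * (e p.2 * e q.2)).
  rewrite -(counitR (Phi := fun x => br (S x) (S b))); last first.
    by move=> * /=; rewrite SlinE brl.
  apply: eq_bigr => p _.
  rewrite -(counitR (Phi := fun y => br (S p.1) (S y))); last first.
    by move=> * /=; rewrite SlinE brr.
  by rewrite mulr_sumr; apply: eq_bigr => q _ /=; ring.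
transitivity (\sum_(p <- D a) \sum_(q <- D b) \sum_(r <- D p.2) \sum_(t <- D q.2)
   X p.1 q.1 r.1 t.1 r.2 t.2).
  apply: eq_bigr => p _; apply: eq_bigr => q _.
  rewrite -Gconv mulr_sumr; apply: eq_bigr => r _.
  by rewrite mulr_sumr; apply: eq_bigr => t _; rewrite /X mulrA.
pose G1 := fun x y z => \sum_(q <- D b) \sum_(t <- D q.2) X x q.1 y t.1 z t.2.
have tG1 : trilin G1.
  apply: trilin_of => ? ? c x x'; rewrite /G1; lsum; lsum; rewrite /X ?SlinE ?brl; ring.
transitivity (\sum_(p <- D a) \sum_(r <- D p.2) G1 p.1 r.1 r.2).
  by apply: eq_bigr => p _; rewrite /G1 exchange_big.
rewrite -(coasE tG1).
transitivity (\sum_(p <- D a) \sum_(r <- D p.1) \sum_(q <- D b) \sum_(t <- D q.1)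
   X r.1 t.1 r.2 t.2 p.2 q.2).
  apply: eq_bigr => p _; apply: eq_bigr => r _; rewrite /G1.
  pose G2 := fun u v w => X r.1 u r.2 v p.2 w.
  have tG2 : trilin G2.
    apply: trilin_of => ? ? c x x'; rewrite /G2 /X ?SlinE ?brr; ring.
  by have := coasE tG2 b; rewrite /G2 => ->.
transitivity (\sum_(p <- D a) \sum_(q <- D b) e p.1 * e q.1 * br p.2 q.2).
  apply: eq_bigr => p _; rewrite exchange_big; apply: eq_bigr => q _ /=.
  rewrite -Fconv mulr_suml; apply: eq_bigr => r _; rewrite mulr_suml.
  by apply: eq_bigr => t _.
rewrite -(counitL (Phi := fun x => br x b)); last by move=> * /=; rewrite brl.
apply: eq_bigr => p _.
rewrite -(counitL (Phi := fun y => br p.2 y)); last by move=> * /=; rewrite brr.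
by rewrite mulr_sumr; apply: eq_bigr => q _; ring.
Qed.

End Br.
End Key.

Theorem theorem2 (k : fieldType)
  (A : algType k) (HA : hopf A) (brA : A -> A -> k)
  (B : algType k) (HB : hopf B) (brB : B -> B -> k)
  (iota : B -> A -> k) :
  is_hopf HA -> braiding HA brA ->
  (* B is a Hopf subalgebra of U_0(A): an injective Hopf map into A^circ
     with image inside U_0(A) *)
  is_hopf HB -> hopf_map HB HA iota ->
  (forall x y, iota x =1 iota y -> x = y) ->
  (forall x, in_U0 HA brA (iota x)) ->
  (* B is braided by the restriction of (l^+(a) | l^-(b)) = <a | S b> *)
  braiding HB brB ->
  (forall x y a b, iota x =1 lplus brA a -> iota y =1 lminus HA brA b ->
     brB x y = brA a (antip HA b)) ->
  let phi := fun (a : A) (x : B) => iota x a in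
  hopf_map HA HB phi /\
  (forall a x, iota x =1 lplus brA a -> phi a =1 lplus brB x) /\
  (forall a x, iota x =1 lminus HA brA a -> phi a =1 lminus HB brB x) /\
  (forall F : B -> k, in_U HB brB F -> exists a, phi a =1 F).
Proof.
move=> hA hbrA hB [ires [ilin [imul [i1 [icop [ieps iS]]]]]] inj U0 hbrB hyp phi.
have resphi : forall a, resdual HB (phi a).
  move=> a; split; first by move=> c x y; rewrite /phi ilin.
  exists (map (fun p => (phi p.1, phi p.2)) (cop HA a)); split.
    elim: (cop HA a) => [|p s IH] //=; split => //; split => c x y; by rewrite /phi ilin.
  by move=> x y; rewrite big_map /phi imul.
have hm : hopf_map HA HB phi.
  split; first exact: resphi.
  split; first by move=> c a b x; rewrite /phi (proj1 (ires x)).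
  split; first by move=> a b x; rewrite /phi icop.
  split; first by move=> x; rewrite /phi ieps.
  split; first by move=> a x y; rewrite /phi imul.
  split; first by move=> a; rewrite /phi i1.
  by move=> a x; rewrite /phi iS.
have p2 : forall a x, iota x =1 lplus brA a -> phi a =1 lplus brB x.
  move=> a x hx y; case: (U0 y) => _ [b hb].
  by rewrite /lplus (hyp _ _ _ _ hx hb) /phi hb.
have p3 : forall a x, iota x =1 lminus HA brA a -> phi a =1 lminus HB brB x.
  move=> a x hx y; case: (U0 y) => [[b hb] _].
  case: (U0 (antip HB x)) => _ [e he].
  rewrite /lminus (hyp _ _ _ _ hb he) /phi hb /lplus.
  have := he b; rewrite /lminus iS hx /lminus => <-.
  by rewrite (brS_main hA hbrA).
split => //; split => //; split => // F hF.
apply: (hF (fun G => exists a, phi a =1 G)).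
- split.
    move=> f [a ha]; case: (resphi a) => hl [t [ht1 ht2]]; split.
      by move=> c x y; rewrite -!ha hl.
    by exists t; split => // x y; rewrite -ha ht2.
  split; first by move=> f g [a ha] hfg; exists a => x; rewrite ha hfg.
  split.
    move=> c f g [a ha] [b hb]; exists (c *: a + b) => x.
    by rewrite -ha -hb /phi (proj1 (ires x)).
  split; first by exists 1 => x; rewrite /phi ieps.
  split.
    move=> f g [a ha] [b hb]; exists (a * b) => x.
    by rewrite /phi icop /conv; apply: eq_bigr => p _; rewrite -ha -hb.
  split.
    by move=> f [a ha]; exists (antip HA a) => x; rewrite -ha /phi iS.
  move=> f [a ha]; exists (map (fun p => (phi p.1, phi p.2)) (cop HA a)); split.
    by elim: (cop HA a) => [|p s IH] //=; split => //; split; [exists p.1|exists p.2].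
  by move=> x y; rewrite big_map -ha /phi imul.
- move=> x; case: (U0 x) => [[a ha] _]; exists a; exact: p2.
- move=> x; case: (U0 x) => _ [a ha]; exists a; exact: p3.
Qed.
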